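(* If $M$ is a term of $\ell\Lambda_\infty^{4S}$, $M\to_0 N$ and $M\leadsto L$, then there is a term $P$ of $\ell\Lambda_\infty^{4S}$ such that $N\leadsto P$ and $L\to_0 P$.
   Context: Preterms: possibly infinite trees generated by $M ::= x \mid MN \mid \lambda x.M \mid \lambda^{\downarrow}x.M \mid \lambda^{\uparrow}x.M \mid \downarrow M \mid \uparrow M$ ($\downarrow M$ inductive box, $\uparrow M$ coinductive box); substitution is capture-avoiding. Patterns: $x,\downarrow x,\uparrow x,\#x,\dagger x$; environments: finite sets of patterns, each variable in at most one; $\Theta,\Xi,\Psi,\Phi$ linear environments with marked versions $\#\Theta$ etc.; $\Upsilon,\Pi$ environments with only patterns $y$, $\downarrow y$; commas are disjoint unions. A term of $\ell\Lambda_\infty^{4S}$ is a preterm $M$ with $\Gamma\vdash M$ derivable for some $\Gamma$ by: (vl) $\#\Theta,\uparrow\Xi,\dagger\Psi,x\vdash x$; (vd) $\#\Theta,\uparrow\Xi,\dagger\Psi,\#x\vdash x$; (va) $\#\Theta,\uparrow\Xi,\dagger\Psi,\dagger x\vdash x$; (a) from $\Upsilon,\#\Theta,\uparrow\Xi,\dagger\Psi\vdash M$ and $\Pi,\#\Theta,\uparrow\Xi,\dagger\Psi\vdash N$ infer $\Upsilon,\Pi,\#\Theta,\uparrow\Xi,\dagger\Psi\vdash MN$; (ll) $\Gamma,x\vdash M$ gives $\Gamma\vdash\lambda x.M$; (li)$_1$ $\Gamma,\#x\vdash M$ gives $\Gamma\vdash\lambda^\downarrow x.M$; (li)$_2$ $\Gamma,\downarrow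 x\vdash M$ gives $\Gamma\vdash\lambda^\downarrow x.M$; (lc) $\Gamma,\uparrow x\vdash M$ gives $\Gamma\vdash\lambda^\uparrow x.M$; (mi) from $\Xi,\uparrow\Psi,\dagger\Phi\vdash M$ infer $\#\Theta,\downarrow\Xi,\uparrow\Psi,\dagger\Phi\vdash\downarrow M$; (mc) from $\dagger\Xi,\dagger\Psi\vdash M$ infer $\#\Theta,\uparrow\Xi,\dagger\Psi\vdash\uparrow M$; (mc) coinductive, others inductive (every infinite branch of a derivation contains infinitely many (mc)). Basic reduction: $(\lambda x.M)N\mapsto M[N/x]$, $(\lambda^\downarrow x.M)(\downarrow N)\mapsto M[N/x]$, $(\lambda^\uparrow x.M)(\uparrow N)\mapsto M[N/x]$. $M\to N$ iff $M=C[L]$, $N=C[P]$, $L\mapsto P$ for a one-hole context $C$; $M\to_0 N$ is the special case in which the hole of $C$ lies inside no coinductive box $\uparrow(\cdot)$ (it may lie inside inductive boxes). Infinitary reduction $\Rightarrow$ and $\leadsto$ are given by the mixed formal system: (coinductive rule) if $M\to^*N$ and $N\leadsto L$ then $M\Rightarrow L$; (inductive rules) $x\leadsto x$; if $M\leadsto N$ and $L\leadsto P$ then $ML\leadsto NP$; if $M\leadsto N$ then $\lambda x.M\leadsto\lambda x.N$, $\lambda^\downarrow x.M\leadsto\lambda^\downarrow x.N$, $\lambda^\uparrow x.M\leadsto\lambda^\uparrow x.N$ and $\downarrow M\leadsto\downarrow N$; if $M\Rightarrow N$ then $\uparrow M\leadsto\uparrow N$. A judgment holds iff it is the root of a possibly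 infinite derivation tree in which every infinite branch uses the coinductive rule infinitely often. *)

(* Defs.v *)
(* Infinitary linear lambda calculus l-Lambda_infty^{4S}.
   Preterms are possibly infinite trees, represented coinductively with
   de Bruijn indices (alpha-equivalence classes of named trees). *)
From Stdlib Require Import Arith.

CoInductive term : Type :=
| Var  : nat -> term
| App  : term -> term -> term
| Lam  : term -> term
| LamI : term -> term          (* \^{down} x.M    *)
| LamC : term -> term          (* \^{up} x.M      *)
| BoxI : term -> term
| BoxC : term -> term.

CoInductive bisim : term -> term -> Prop :=
| b_var  n : bisim (Var n) (Var n)
| b_app  M M' N N' : bisim M M' -> bisim N N' -> bisim (App M N) (App M' N')
| b_lam  M M' : bisim M M' -> bisim (Lam M) (Lam M')
| b_lamI M M' : bisim M M' -> bisim (LamI M) (LamI M')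
| b_lamC M M' : bisim M M' -> bisim (LamC M) (LamC M')
| b_boxI M M' : bisim M M' -> bisim (BoxI M) (BoxI M')
| b_boxC M M' : bisim M M' -> bisim (BoxC M) (BoxC M').

CoFixpoint lift (c : nat) (t : term) : term :=
  match t with
  | Var n => Var (if Nat.ltb n c then n else S n)
  | App a b => App (lift c a) (lift c b)
  | Lam a => Lam (lift (S c) a)
  | LamI a => LamI (lift (S c) a)
  | LamC a => LamC (lift (S c) a)
  | BoxI a => BoxI (lift c a)
  | BoxC a => BoxC (lift c a)
  end.

(* capture-avoiding substitution of N for index k (N already lifted to depth k),
   decrementing the indices above k *)
CoFixpoint substk (k : nat) (N : term) (t : term) : term :=
  match t with
  | Var n => if Nat.eqb n k then N
             else if Nat.ltb k n then Var (pred n) else Var n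
  | App a b => App (substk k N a) (substk k N b)
  | Lam a => Lam (substk (S k) (lift 0 N) a)
  | LamI a => LamI (substk (S k) (lift 0 N) a)
  | LamC a => LamC (substk (S k) (lift 0 N) a)
  | BoxI a => BoxI (substk k N a)
  | BoxC a => BoxC (substk k N a)
  end.

(* M[N/x] where x is the variable bound by the enclosing binder of M *)
Definition subst0 (N M : term) : term := substk 0 N M.

(* pattern kinds: x, down x, up x, #x, dagger x *)
Inductive kind : Type := KLin | KInd | KCoi | KHash | KDag.

Definition env := nat -> option kind.

Definition env_finite (G : env) : Prop := exists n, forall i, n <= i -> G i = None.

(* Gamma, p : the environment for the body of a binder (index 0 is the bound variable) *)
Definition ext (k : kind) (G : env) : env :=
  fun i => match i with 0 => Some k | S j => G j end.

(* entries allowed in the "#Theta, up Xi, dagger Psi" part *)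
Definition weak (o : option kind) : Prop :=
  match o with None | Some KHash | Some KCoi | Some KDag => True | _ => False end.

(* G = #Theta, up Xi, dagger Psi, p   with p one of x, #x, dagger x at index i *)
Definition var_env (G : env) (i : nat) : Prop :=
  (G i = Some KLin \/ G i = Some KHash \/ G i = Some KDag) /\
  (forall j, j <> i -> weak (G j)).

(* G = Upsilon, Pi, #Theta, up Xi, dagger Psi with G1 = Upsilon, #Theta, up Xi, dagger Psi
   and G2 = Pi, #Theta, up Xi, dagger Psi (Upsilon, Pi only contain y and down y) *)
Definition app_split (G G1 G2 : env) : Prop :=
  forall i,
    match G i with
    | None => G1 i = None /\ G2 i = None
    | Some KLin => (G1 i = Some KLin /\ G2 i = None) \/ (G1 i = None /\ G2 i = Some KLin)
    | Some KInd => (G1 i = Some KInd /\ G2 i = None) \/ (G1 i = None /\ G2 i = Some KInd)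
    | Some k => G1 i = Some k /\ G2 i = Some k
    end.

(* rule (mi): conclusion  #Theta, down Xi, up Psi, dagger Phi;  premise  Xi, up Psi, dagger Phi *)
Definition mi_ok (G : env) : Prop := forall i, G i <> Some KLin.
Definition mi_env (G : env) : env :=
  fun i => match G i with
           | Some KInd => Some KLin
           | Some KCoi => Some KCoi
           | Some KDag => Some KDag
           | _ => None
           end.

(* rule (mc): conclusion  #Theta, up Xi, dagger Psi;  premise  dagger Xi, dagger Psi *)
Definition mc_ok (G : env) : Prop := forall i, weak (G i).
Definition mc_env (G : env) : env :=
  fun i => match G i with
           | Some KCoi => Some KDag
           | Some KDag => Some KDag
           | _ => None
           end.

(* inductive rules; R is used for the premise of the coinductive rule (mc) *)
Inductive typI (R : env -> term -> Prop) : env -> term -> Prop :=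
| t_var G i : var_env G i -> typI R G (Var i)
| t_app G G1 G2 M N : app_split G G1 G2 -> typI R G1 M -> typI R G2 N ->
    typI R G (App M N)
| t_ll G M : typI R (ext KLin G) M -> typI R G (Lam M)
| t_li1 G M : typI R (ext KHash G) M -> typI R G (LamI M)
| t_li2 G M : typI R (ext KInd G) M -> typI R G (LamI M)
| t_lc G M : typI R (ext KCoi G) M -> typI R G (LamC M)
| t_mi G M : mi_ok G -> typI R (mi_env G) M -> typI R G (BoxI M)
| t_mc G M : mc_ok G -> R (mc_env G) M -> typI R G (BoxC M).

(* mixed derivability: greatest fixed point over (mc) of the least fixed point of the rest *)
Definition typ (G : env) (M : term) : Prop :=
  exists R : env -> term -> Prop, (forall G' M', R G' M' -> typI R G' M') /\ R G M.

Definition is_term (M : term) : Prop := exists G, env_finite G /\ typ G M.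

Inductive redex : term -> term -> Prop :=
| r_lin M N : redex (App (Lam M) N) (subst0 N M)
| r_ind M N : redex (App (LamI M) (BoxI N)) (subst0 N M)
| r_coi M N : redex (App (LamC M) (BoxC N)) (subst0 N M).

(* one-hole context closure; the hole may go under a coinductive box only if deep = true *)
Inductive ctx_step (deep : bool) : term -> term -> Prop :=
| c_base M N : redex M N -> ctx_step deep M N
| c_appl M M' N : ctx_step deep M M' -> ctx_step deep (App M N) (App M' N)
| c_appr M N N' : ctx_step deep N N' -> ctx_step deep (App M N) (App M N')
| c_lam M M' : ctx_step deep M M' -> ctx_step deep (Lam M) (Lam M')
| c_lamI M M' : ctx_step deep M M' -> ctx_step deep (LamI M) (LamI M')
| c_lamC M M' : ctx_step deep M M' -> ctx_step deep (LamC M) (LamC M')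
| c_boxI M M' : ctx_step deep M M' -> ctx_step deep (BoxI M) (BoxI M')
| c_boxC M M' : deep = true -> ctx_step deep M M' -> ctx_step deep (BoxC M) (BoxC M').

(* relations on trees: closed under tree equality *)
Definition step (M N : term) : Prop :=
  exists M' N', bisim M M' /\ ctx_step true M' N' /\ bisim N' N.
Definition step0 (M N : term) : Prop :=
  exists M' N', bisim M M' /\ ctx_step false M' N' /\ bisim N' N.

Inductive star : term -> term -> Prop :=
| s_refl M N : bisim M N -> star M N
| s_step M N L : step M N -> star N L -> star M L.

(* inductive rules of infinitary reduction; R stands for => in the up-box rule *)
Inductive leadsI (R : term -> term -> Prop) : term -> term -> Prop :=
| l_var n : leadsI R (Var n) (Var n)
| l_app M N L P : leadsI R M N -> leadsI R L P -> leadsI R (App M L) (App N P)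
| l_lam M N : leadsI R M N -> leadsI R (Lam M) (Lam N)
| l_lamI M N : leadsI R M N -> leadsI R (LamI M) (LamI N)
| l_lamC M N : leadsI R M N -> leadsI R (LamC M) (LamC N)
| l_boxI M N : leadsI R M N -> leadsI R (BoxI M) (BoxI N)
| l_boxC M N : R M N -> leadsI R (BoxC M) (BoxC N).

(* M => L : coinductive rule  M ->* N, N ~> L  gives  M => L *)
Definition infred (M L : term) : Prop :=
  exists R : term -> term -> Prop,
    (forall M' L', R M' L' -> exists N, star M' N /\ leadsI R N L') /\ R M L.

Definition leads (M L : term) : Prop := leadsI infred M L.

(* Main.v *)
Require Import Defs.
From Stdlib Require Import Arith Lia FunctionalExtensionality.


Definition frob (t : term) : term :=
  match t with
  | Var n => Var n | App a b => App a b | Lam a => Lam a | LamI a => LamI a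
  | LamC a => LamC a | BoxI a => BoxI a | BoxC a => BoxC a end.
Lemma frob_eq t : t = frob t. Proof. destruct t; reflexivity. Qed.

Lemma lift_Var c n : lift c (Var n) = Var (if Nat.ltb n c then n else S n).
Proof. rewrite (frob_eq (lift c (Var n))). reflexivity. Qed.
Lemma lift_App c a b : lift c (App a b) = App (lift c a) (lift c b).
Proof. rewrite (frob_eq (lift c (App a b))). reflexivity. Qed.
Lemma lift_Lam c a : lift c (Lam a) = Lam (lift (S c) a).
Proof. rewrite (frob_eq (lift c (Lam a))). reflexivity. Qed.
Lemma lift_LamI c a : lift c (LamI a) = LamI (lift (S c) a).
Proof. rewrite (frob_eq (lift c (LamI a))). reflexivity. Qed.
Lemma lift_LamC c a : lift c (LamC a) = LamC (lift (S c) a).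
Proof. rewrite (frob_eq (lift c (LamC a))). reflexivity. Qed.
Lemma lift_BoxI c a : lift c (BoxI a) = BoxI (lift c a).
Proof. rewrite (frob_eq (lift c (BoxI a))). reflexivity. Qed.
Lemma lift_BoxC c a : lift c (BoxC a) = BoxC (lift c a).
Proof. rewrite (frob_eq (lift c (BoxC a))). reflexivity. Qed.

Lemma subst_Var k N n : substk k N (Var n) =
  if Nat.eqb n k then N else if Nat.ltb k n then Var (pred n) else Var n.
Proof. rewrite (frob_eq (substk k N (Var n))). simpl.
  destruct (Nat.eqb n k); [destruct N; reflexivity|destruct (Nat.ltb k n); reflexivity]. Qed.
Lemma subst_App k N a b : substk k N (App a b) = App (substk k N a) (substk k N b).
Proof. rewrite (frob_eq (substk k N (App a b))). reflexivity. Qed.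
Lemma subst_Lam k N a : substk k N (Lam a) = Lam (substk (S k) (lift 0 N) a).
Proof. rewrite (frob_eq (substk k N (Lam a))). reflexivity. Qed.
Lemma subst_LamI k N a : substk k N (LamI a) = LamI (substk (S k) (lift 0 N) a).
Proof. rewrite (frob_eq (substk k N (LamI a))). reflexivity. Qed.
Lemma subst_LamC k N a : substk k N (LamC a) = LamC (substk (S k) (lift 0 N) a).
Proof. rewrite (frob_eq (substk k N (LamC a))). reflexivity. Qed.
Lemma subst_BoxI k N a : substk k N (BoxI a) = BoxI (substk k N a).
Proof. rewrite (frob_eq (substk k N (BoxI a))). reflexivity. Qed.
Lemma subst_BoxC k N a : substk k N (BoxC a) = BoxC (substk k N a).
Proof. rewrite (frob_eq (substk k N (BoxC a))). reflexivity. Qed.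

Ltac simpl_ls := repeat first [rewrite lift_App | rewrite lift_Lam | rewrite lift_LamI
  | rewrite lift_LamC | rewrite lift_BoxI | rewrite lift_BoxC
  | rewrite subst_App | rewrite subst_Lam | rewrite subst_LamI
  | rewrite subst_LamC | rewrite subst_BoxI | rewrite subst_BoxC].

CoFixpoint bisim_refl t : bisim t t :=
  match t with
  | Var n => b_var n
  | App a b => b_app _ _ _ _ (bisim_refl a) (bisim_refl b)
  | Lam a => b_lam _ _ (bisim_refl a)
  | LamI a => b_lamI _ _ (bisim_refl a)
  | LamC a => b_lamC _ _ (bisim_refl a)
  | BoxI a => b_boxI _ _ (bisim_refl a)
  | BoxC a => b_boxC _ _ (bisim_refl a)
  end.

Lemma bisim_sym : forall a b, bisim a b -> bisim b a.
Proof. cofix CH. intros a b H. destruct H; constructor; apply CH; assumption. Qed.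

Lemma bisim_trans : forall a b c, bisim a b -> bisim b c -> bisim a c.
Proof. cofix CH. intros a b c H1 H2. destruct H1; inversion H2; subst;
  constructor; eapply CH; eassumption. Qed.

Inductive bF (S : term -> term -> Prop) : term -> term -> Prop :=
| bf_var n : bF S (Var n) (Var n)
| bf_app M M' N N' : S M M' -> S N N' -> bF S (App M N) (App M' N')
| bf_lam M M' : S M M' -> bF S (Lam M) (Lam M')
| bf_lamI M M' : S M M' -> bF S (LamI M) (LamI M')
| bf_lamC M M' : S M M' -> bF S (LamC M) (LamC M')
| bf_boxI M M' : S M M' -> bF S (BoxI M) (BoxI M')
| bf_boxC M M' : S M M' -> bF S (BoxC M) (BoxC M').

Definition upto (R : term -> term -> Prop) a b :=
  exists a' b', bisim a a' /\ (R a' b' \/ bisim a' b') /\ bisim b' b.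

Lemma upto_R (R : term -> term -> Prop) a b : R a b -> upto R a b.
Proof. intros; exists a, b; repeat split; auto using bisim_refl. Qed.
Lemma upto_bisim (R : term -> term -> Prop) a b : bisim a b -> upto R a b.
Proof. intros; exists a, b; repeat split; auto using bisim_refl. Qed.
Lemma upto_l (R : term -> term -> Prop) a a' b : bisim a a' -> upto R a' b -> upto R a b.
Proof. intros H [x [y [H1 H2]]]. exists x, y; split; [eapply bisim_trans; eauto | auto]. Qed.
Lemma upto_r (R : term -> term -> Prop) a b b' : upto R a b' -> bisim b' b -> upto R a b.
Proof. intros [x [y [H1 [H2 H3]]]] H. exists x, y; repeat split; auto; eapply bisim_trans; eauto. Qed.

Lemma upto_sound (R : term -> term -> Prop) :
  (forall a b, R a b -> bF (upto R) a b) -> forall a b, R a b -> bisim a b.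
Proof.
  intros HR. assert (G : forall a b, upto R a b -> bisim a b).
  { cofix CH. intros a b [a' [b' [H1 [[H2|H2] H3]]]].
    - apply HR in H2. destruct H2; inversion H1; inversion H3; subst; try apply bisim_refl;
        constructor; apply CH; eapply upto_l; try eassumption; eapply upto_r; eassumption.
    - eapply bisim_trans; [eapply bisim_trans|]; eassumption. }
  intros a b H; apply G, upto_R, H.
Qed.

Lemma bisim_bF (R : term -> term -> Prop) a b : bisim a b -> bF (upto R) a b.
Proof. intro H; destruct H; constructor; apply upto_bisim; assumption. Qed.


Lemma lift_cong : forall c M M', bisim M M' -> bisim (lift c M) (lift c M').
Proof.
  intros c M M' H. apply (upto_sound (fun a b => exists c M M', bisim M M' /\ a = lift c M /\ b = lift c M')).
  2: exists c, M, M'; auto.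
  clear. intros a b (c & M & M' & H & -> & ->). destruct H; simpl_ls.
  1: rewrite !lift_Var; constructor.
  all: constructor; apply upto_R; (do 3 eexists; split; [|split; reflexivity]; eassumption).
Qed.

Lemma subst_cong : forall k N N' M M', bisim N N' -> bisim M M' ->
  bisim (substk k N M) (substk k N' M').
Proof.
  intros k N N' M M' HN HM.
  apply (upto_sound (fun a b => exists k N N' M M', bisim N N' /\ bisim M M' /\
     a = substk k N M /\ b = substk k N' M')). 2: exists k, N, N', M, M'; auto.
  clear. intros a b (k & N & N' & M & M' & HN & H & -> & ->). destruct H; simpl_ls.
  1: { rewrite !subst_Var. destruct (Nat.eqb n k). apply bisim_bF; auto.
    destruct (Nat.ltb k n); constructor. }
  all: constructor; apply upto_R; (do 5 eexists; split; [|split; [|split; reflexivity]];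
    try eassumption; apply lift_cong; assumption).
Qed.

Lemma lift_lift : forall c d M, c <= d -> bisim (lift c (lift d M)) (lift (S d) (lift c M)).
Proof.
  intros c d M H.
  apply (upto_sound (fun a b => exists c d M, c <= d /\ a = lift c (lift d M) /\ b = lift (S d) (lift c M))).
  2: exists c, d, M; auto. clear.
  intros a b (c & d & M & H & -> & ->). destruct M; simpl_ls.
  1: { rewrite !lift_Var. apply bisim_bF.
    repeat match goal with |- context [Nat.ltb ?a ?b] => destruct (Nat.ltb_spec a b) end;
     rewrite ?lift_Var;
    repeat match goal with |- context [Nat.ltb ?a ?b] => destruct (Nat.ltb_spec a b) end;
    try (exfalso; lia); first [apply bisim_refl | match goal with |- bisim (Var ?a) (Var ?b) => replace a with b by lia; apply bisim_refl end]. }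
  all: constructor; apply upto_R; (do 3 eexists; split; [|split; reflexivity]; lia).
Qed.

Ltac cmp_destr := match goal with
  | |- context [Nat.eqb ?a ?b] => destruct (Nat.eqb_spec a b)
  | |- context [Nat.ltb ?a ?b] => destruct (Nat.ltb_spec a b)
  | H : context [Nat.eqb ?a ?b] |- _ => destruct (Nat.eqb_spec a b)
  | H : context [Nat.ltb ?a ?b] |- _ => destruct (Nat.ltb_spec a b) end.
Ltac var_solve := apply bisim_bF;
  repeat (rewrite ?subst_Var, ?lift_Var; try cmp_destr); try (exfalso; lia);
  try (exfalso; lia); try apply bisim_refl;
  try (match goal with |- bisim (Var ?a) (Var ?b) => replace a with b by lia; apply bisim_refl end).

Ltac upR := apply upto_R.

Lemma lift_subst : forall c k N M, c <= k ->
  bisim (lift c (substk k N M)) (substk (S k) (lift c N) (lift c M)).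
Proof.
  intros c k N M H.
  apply (upto_sound (fun a b => exists c k N M, c <= k /\ a = lift c (substk k N M) /\
     b = substk (S k) (lift c N) (lift c M))). 2: exists c, k, N, M; auto. clear.
  intros a b (c & k & N & M & H & -> & ->). destruct M; simpl_ls.
  1: { var_solve. }
  par: constructor; try (upR; do 4 eexists; split; [|split; reflexivity]; lia);
    (eapply upto_r; [upR; do 4 eexists; split; [|split; reflexivity]; lia|]);
    (apply subst_cong; [apply bisim_sym; apply lift_lift; lia | apply bisim_refl]).
Qed.

Lemma lift_subst2 : forall c k N M, k <= c ->
  bisim (lift c (substk k N M)) (substk k (lift c N) (lift (S c) M)).
Proof.
  intros c k N M H.
  apply (upto_sound (fun a b => exists c k N M, k <= c /\ a = lift c (substk k N M) /\
     b = substk k (lift c N) (lift (S c) M))). 2: exists c, k, N, M; auto. clear.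
  intros a b (c & k & N & M & H & -> & ->). destruct M; simpl_ls.
  1: { var_solve. }
  par: constructor; try (upR; do 4 eexists; split; [|split; reflexivity]; lia);
    (eapply upto_r; [upR; do 4 eexists; split; [|split; reflexivity]; lia|]);
    (apply subst_cong; [apply bisim_sym; apply lift_lift; lia | apply bisim_refl]).
Qed.

Lemma subst_lift : forall k N M, bisim (substk k N (lift k M)) M.
Proof.
  intros k N M.
  apply (upto_sound (fun a b => exists k N M, a = substk k N (lift k M) /\ b = M)).
  2: exists k, N, M; auto. clear.
  intros a b (k & N & M & -> & ->). destruct M; simpl_ls.
  1: { var_solve. }
  par: constructor; upR; do 3 eexists; split; reflexivity.
Qed.

Lemma subst_subst : forall j k B N M, j <= k ->
  bisim (substk k B (substk j N M)) (substk j (substk k B N) (substk (S k) (lift j B) M)).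
Proof.
  intros j k B N M H.
  apply (upto_sound (fun a b => exists j k B N M, j <= k /\ a = substk k B (substk j N M) /\
     b = substk j (substk k B N) (substk (S k) (lift j B) M))).
  2: exists j, k, B, N, M; auto. clear.
  intros a b (j & k & B & N & M & H & -> & ->). destruct M; simpl_ls.
  1: { var_solve. apply bisim_sym, subst_lift. }
  par: constructor; try (upR; do 5 eexists; split; [|split; reflexivity]; lia);
    (eapply upto_r; [upR; do 5 eexists; split; [|split; reflexivity]; lia|]);
    (apply subst_cong; [ apply bisim_sym; apply lift_subst; lia
                       | apply subst_cong; [apply bisim_sym; apply lift_lift; lia | apply bisim_refl]]).
Qed.


Lemma ctx_lift d : forall X D, ctx_step d X D -> forall c,
  exists Y, ctx_step d (lift c X) Y /\ bisim Y (lift c D).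
Proof.
  induction 1; intro c; simpl_ls.
  1:{ destruct H; simpl_ls; (eexists; split; [apply c_base; constructor|]);
    unfold subst0; apply bisim_sym, lift_subst2; lia. }
  all: destruct (IHctx_step c) as [Y1 [H1 H2]];
       destruct (IHctx_step (S c)) as [Y2 [H3 H4]].
  all: eexists; split; [first [ eapply c_appl; eassumption | eapply c_appr; eassumption
      | eapply c_lam; eassumption | eapply c_lamI; eassumption | eapply c_lamC; eassumption
      | eapply c_boxI; eassumption | eapply c_boxC; eassumption ]|];
    constructor; eauto using bisim_refl.
Qed.

Lemma ctx_subst d : forall X D, ctx_step d X D -> forall k B,
  exists Y, ctx_step d (substk k B X) Y /\ bisim Y (substk k B D).
Proof.
  induction 1; intros k B; simpl_ls.
  1:{ destruct H; simpl_ls; (eexists; split; [apply c_base; constructor|]);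
    unfold subst0; apply bisim_sym, subst_subst; lia. }
  all: destruct (IHctx_step k B) as [Y1 [H1 H2]];
       destruct (IHctx_step (S k) (lift 0 B)) as [Y2 [H3 H4]].
  all: eexists; split; [first [ eapply c_appl; eassumption | eapply c_appr; eassumption
      | eapply c_lam; eassumption | eapply c_lamI; eassumption | eapply c_lamC; eassumption
      | eapply c_boxI; eassumption | eapply c_boxC; eassumption ]|];
    constructor; eauto using bisim_refl.
Qed.

Lemma step_lift c X D : step X D -> step (lift c X) (lift c D).
Proof.
  intros (X' & D' & H1 & H2 & H3). destruct (ctx_lift _ _ _ H2 c) as [Y [H4 H5]].
  exists (lift c X'), Y. split; [apply lift_cong; auto|split; auto].
  eapply bisim_trans; [eauto|apply lift_cong; auto].
Qed.

Lemma step_subst k B X D : step X D -> step (substk k B X) (substk k B D).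
Proof.
  intros (X' & D' & H1 & H2 & H3). destruct (ctx_subst _ _ _ H2 k B) as [Y [H4 H5]].
  exists (substk k B X'), Y. split; [apply subst_cong; auto using bisim_refl|split; auto].
  eapply bisim_trans; [eauto|apply subst_cong; auto using bisim_refl].
Qed.

Lemma step_bisim_l a a' b : bisim a a' -> step a' b -> step a b.
Proof. intros H (x & y & H1 & H2 & H3). exists x, y; split; auto; eapply bisim_trans; eauto. Qed.
Lemma step_bisim_r a b b' : step a b -> bisim b b' -> step a b'.
Proof. intros (x & y & H1 & H2 & H3) H. exists x, y; repeat split; auto; eapply bisim_trans; eauto. Qed.

Lemma star_trans a b c : star a b -> star b c -> star a c.
Proof.
  intro H; revert c; induction H; intros c Hc.
  - inversion Hc; subst.
    + apply s_refl; eapply bisim_trans; eauto.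
    + eapply s_step; [eapply step_bisim_l; eauto|auto].
  - eapply s_step; eauto.
Qed.

Lemma star_bisim_l a a' b : bisim a a' -> star a' b -> star a b.
Proof. intros; eapply star_trans; [apply s_refl; eauto|auto]. Qed.
Lemma star_bisim_r a b b' : star a b -> bisim b b' -> star a b'.
Proof. intros; eapply star_trans; [eauto|apply s_refl; auto]. Qed.
Lemma star_one a b : step a b -> star a b.
Proof. intros; eapply s_step; eauto. apply s_refl, bisim_refl. Qed.

Lemma star_lift c a b : star a b -> star (lift c a) (lift c b).
Proof. induction 1. apply s_refl, lift_cong; auto. eapply s_step; eauto using step_lift. Qed.
Lemma star_subst k B a b : star a b -> star (substk k B a) (substk k B b).
Proof. induction 1. apply s_refl, subst_cong; auto using bisim_refl. eapply s_step; eauto using step_subst. Qed.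

Lemma star_cong (f : term -> term)
  (Hb : forall a b, bisim a b -> bisim (f a) (f b))
  (Hc : forall a b, ctx_step true a b -> ctx_step true (f a) (f b)) :
  forall a b, star a b -> star (f a) (f b).
Proof.
  induction 1. apply s_refl; auto.
  eapply s_step; eauto. destruct H as (x & y & H1 & H2 & H3). exists (f x), (f y); auto.
Qed.

Lemma star_appl N a b : star a b -> star (App a N) (App b N).
Proof. apply (star_cong (fun x => App x N)); intros; [constructor; auto using bisim_refl|apply c_appl; auto]. Qed.
Lemma star_appr N a b : star a b -> star (App N a) (App N b).
Proof. apply (star_cong (fun x => App N x)); intros; [constructor; auto using bisim_refl|apply c_appr; auto]. Qed.
Lemma star_app a b c d : star a b -> star c d -> star (App a c) (App b d).
Proof. intros; eapply star_trans; [apply star_appl|apply star_appr]; eauto. Qed.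
Lemma star_lam a b : star a b -> star (Lam a) (Lam b).
Proof. apply (star_cong Lam); intros; [constructor; auto|apply c_lam; auto]. Qed.
Lemma star_lamI a b : star a b -> star (LamI a) (LamI b).
Proof. apply (star_cong LamI); intros; [constructor; auto|apply c_lamI; auto]. Qed.
Lemma star_lamC a b : star a b -> star (LamC a) (LamC b).
Proof. apply (star_cong LamC); intros; [constructor; auto|apply c_lamC; auto]. Qed.
Lemma star_boxI a b : star a b -> star (BoxI a) (BoxI b).
Proof. apply (star_cong BoxI); intros; [constructor; auto|apply c_boxI; auto]. Qed.
Lemma star_boxC a b : star a b -> star (BoxC a) (BoxC b).
Proof. apply (star_cong BoxC); intros; [constructor; auto|apply c_boxC; auto]. Qed.


Lemma leadsI_mono (R S : term -> term -> Prop) : (forall a b, R a b -> S a b) ->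
  forall a b, leadsI R a b -> leadsI S a b.
Proof. intros HRS; induction 1; constructor; auto. Qed.

Lemma infred_unfold a b : infred a b -> exists D, star a D /\ leadsI infred D b.
Proof.
  intros [R [HR Hab]]. destruct (HR _ _ Hab) as [D [H1 H2]]. exists D; split; auto.
  eapply leadsI_mono; [|eauto]. intros x y Hxy. exists R; auto.
Qed.

Lemma infred_fold a b : (exists D, star a D /\ leadsI infred D b) -> infred a b.
Proof.
  intros [D [H1 H2]]. exists (fun x y => infred x y \/ (x = a /\ y = b)). split; auto.
  intros x y [Hxy | [-> ->]].
  - destruct (infred_unfold _ _ Hxy) as [E [H3 H4]]. exists E; split; auto.
    eapply leadsI_mono; [|eauto]; auto.
  - exists D; split; auto. eapply leadsI_mono; [|eauto]; auto.
Qed.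

Lemma leads_infred a b : leadsI infred a b -> infred a b.
Proof. intros; apply infred_fold; exists a; split; auto. apply s_refl, bisim_refl. Qed.

Lemma leadsI_lift (R S : term -> term -> Prop)
  (HRS : forall c X Y, R X Y -> S (lift c X) (lift c Y)) :
  forall D Y, leadsI R D Y -> forall c, leadsI S (lift c D) (lift c Y).
Proof. induction 1; intro c; simpl_ls; try rewrite !lift_Var; constructor; auto. Qed.

Lemma infred_lift c X Y : infred X Y -> infred (lift c X) (lift c Y).
Proof.
  intro H. exists (fun a b => exists c X Y, infred X Y /\ a = lift c X /\ b = lift c Y).
  split; [|eauto 7].
  intros a b (c' & X' & Y' & H1 & -> & ->).
  destruct (infred_unfold _ _ H1) as [D [H2 H3]]. exists (lift c' D); split.
  - apply star_lift; auto.
  - eapply leadsI_lift; [|eauto]. intros; eauto 7.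
Qed.

Lemma leads_lift c X Y : leadsI infred X Y -> leadsI infred (lift c X) (lift c Y).
Proof. intro H; eapply leadsI_lift; [|eauto]. intros; apply infred_lift; auto. Qed.

Definition SR (a b : term) : Prop :=
  infred a b \/ exists k B B' X Y, infred X Y /\ infred B B' /\
     a = substk k B X /\ b = substk k B' Y.

Lemma outer_sub : forall D Y, leadsI infred D Y -> forall k B B', infred B B' ->
  exists E, star (substk k B D) E /\ leadsI SR E (substk k B' Y).
Proof.
  induction 1; intros k B B' HB; simpl_ls.
  - rewrite !subst_Var. destruct (Nat.eqb n k).
    + destruct (infred_unfold _ _ HB) as [E [H1 H2]]. exists E; split; auto.
      eapply leadsI_mono; [|eauto]. unfold SR; auto.
    + eexists; split; [apply s_refl, bisim_refl|]. destruct (Nat.ltb k n); constructor.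
  - destruct (IHleadsI1 k B B' HB) as [E1 [H1 H2]].
    destruct (IHleadsI2 k B B' HB) as [E2 [H3 H4]].
    exists (App E1 E2); split; [apply star_app; auto|constructor; auto].
  - destruct (IHleadsI (S k) (lift 0 B) (lift 0 B')) as [E [H1 H2]]; [apply infred_lift; auto|].
    exists (Lam E); split; [apply star_lam; auto|constructor; auto].
  - destruct (IHleadsI (S k) (lift 0 B) (lift 0 B')) as [E [H1 H2]]; [apply infred_lift; auto|].
    exists (LamI E); split; [apply star_lamI; auto|constructor; auto].
  - destruct (IHleadsI (S k) (lift 0 B) (lift 0 B')) as [E [H1 H2]]; [apply infred_lift; auto|].
    exists (LamC E); split; [apply star_lamC; auto|constructor; auto].
  - destruct (IHleadsI k B B' HB) as [E [H1 H2]].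
    exists (BoxI E); split; [apply star_boxI; auto|constructor; auto].
  - exists (BoxC (substk k B M)); split; [apply s_refl, bisim_refl|].
    constructor. right. exists k, B, B', M, N; auto.
Qed.

Lemma infred_subst k B B' X Y : infred X Y -> infred B B' ->
  infred (substk k B X) (substk k B' Y).
Proof.
  intros H HB. exists SR. split; [|right; exists k, B, B', X, Y; auto].
  intros a b [Hab | (k' & C & C' & X' & Y' & H1 & H2 & -> & ->)].
  - destruct (infred_unfold _ _ Hab) as [E [H3 H4]]. exists E; split; auto.
    eapply leadsI_mono; [|eauto]. unfold SR; auto.
  - destruct (infred_unfold _ _ H1) as [D [H3 H4]].
    destruct (outer_sub _ _ H4 k' C C' H2) as [E [H5 H6]].
    exists E; split; auto. eapply star_trans; [apply star_subst; eauto|auto].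
Qed.

Inductive occ0 : nat -> term -> Prop :=
| o_var k : occ0 k (Var k)
| o_appl k M N : occ0 k M -> occ0 k (App M N)
| o_appr k M N : occ0 k N -> occ0 k (App M N)
| o_lam k M : occ0 (S k) M -> occ0 k (Lam M)
| o_lamI k M : occ0 (S k) M -> occ0 k (LamI M)
| o_lamC k M : occ0 (S k) M -> occ0 k (LamC M)
| o_boxI k M : occ0 k M -> occ0 k (BoxI M).

Lemma leads_subst : forall A A', leadsI infred A A' -> forall k B B', infred B B' ->
  (occ0 k A -> leadsI infred B B') ->
  leadsI infred (substk k B A) (substk k B' A').
Proof.
  induction 1; intros k B B' HB Hocc; simpl_ls.
  - rewrite !subst_Var. destruct (Nat.eqb_spec n k).
    + subst; apply Hocc; constructor.
    + destruct (Nat.ltb k n); constructor.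
  - constructor; [apply IHleadsI1|apply IHleadsI2]; auto; intro; apply Hocc;
      [apply o_appl|apply o_appr]; auto.
  - constructor; apply IHleadsI; [apply infred_lift; auto|].
    intro; apply leads_lift, Hocc; constructor; auto.
  - constructor; apply IHleadsI; [apply infred_lift; auto|].
    intro; apply leads_lift, Hocc; constructor; auto.
  - constructor; apply IHleadsI; [apply infred_lift; auto|].
    intro; apply leads_lift, Hocc; constructor; auto.
  - constructor; apply IHleadsI; auto. intro; apply Hocc; constructor; auto.
  - constructor; apply infred_subst; auto.
Qed.

Lemma infred_bisim_l a a' b : bisim a a' -> infred a b -> infred a' b.
Proof.
  intros H1 H2. destruct (infred_unfold _ _ H2) as [D [H3 H4]]. apply infred_fold.
  exists D; split; auto. eapply star_bisim_l; [apply bisim_sym; eauto|auto].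
Qed.

Lemma leads_bisim_l : forall a b, leadsI infred a b -> forall a', bisim a a' -> leadsI infred a' b.
Proof.
  induction 1; intros a' Hb; inversion Hb; subst; constructor; eauto.
  eapply infred_bisim_l; eauto.
Qed.


Definition econs (o : option kind) (G : env) : env :=
  fun i => match i with 0 => o | S j => G j end.
Definition rem (k : nat) (E : env) : env := fun i => if Nat.ltb i k then E i else E (S i).
Definition ins (c : nat) (o : option kind) (F : env) : env :=
  fun i => if Nat.ltb i c then F i else if Nat.eqb i c then o else F (pred i).

Ltac destr_ok :=
  match goal with
  | |- context [ Nat.ltb ?a ?b ] => destruct (Nat.ltb a b)
  | |- context [ Nat.eqb ?a ?b ] => destruct (Nat.eqb a b)
  | H : context [ Nat.ltb ?a ?b ] |- _ => destruct (Nat.ltb a b)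
  | H : context [ Nat.eqb ?a ?b ] |- _ => destruct (Nat.eqb a b)
  | o : option kind |- _ => destruct o as [[]|]
  | |- context [ ?f ?x ] =>
      lazymatch type of (f x) with option kind =>
        let t := constr:(f x) in lazymatch t with Some _ => fail | None => fail | _ => destruct t as [[]|] end end
  | H : context [ ?f ?x ] |- _ =>
      lazymatch type of (f x) with option kind =>
        let t := constr:(f x) in lazymatch t with Some _ => fail | None => fail | _ => destruct t as [[]|] end end
  end.
Ltac envsolve := unfold econs, rem, ins, ext, mi_env, mc_env, weak in *;
  (repeat (destr_ok; simpl in *; try discriminate;
  repeat match goal with H : _ /\ _ |- _ => destruct H | H : _ \/ _ |- _ => destruct H
    | H : Some _ = None |- _ => discriminate H | H : None = Some _ |- _ => discriminate H
    | H : Some ?a = Some ?b |- _ => (discriminate H || (injection H; clear H; intros)) end));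
  intuition (try reflexivity; try discriminate; try congruence).

Lemma typI_mono (R S : env -> term -> Prop) : (forall G M, R G M -> S G M) ->
  forall G M, typI R G M -> typI S G M.
Proof. intros HRS; induction 1; [eapply t_var | eapply t_app | eapply t_ll | eapply t_li1
  | eapply t_li2 | eapply t_lc | eapply t_mi | eapply t_mc]; eauto. Qed.

Lemma typ_unfold G M : typ G M -> typI typ G M.
Proof.
  intros [R [HR H]]. eapply typI_mono; [|apply HR; eauto]. intros; exists R; auto.
Qed.

Lemma typ_fold G M : typI typ G M -> typ G M.
Proof.
  intro H. exists (fun G' M' => typ G' M' \/ (G' = G /\ M' = M)). split; auto.
  intros G' M' [H1|[-> ->]].
  - eapply typI_mono; [|apply typ_unfold; eauto]. auto.
  - eapply typI_mono; [|eauto]. auto.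
Qed.

Lemma typ_coind (R : env -> term -> Prop) :
  (forall G M, R G M -> typI (fun G M => R G M \/ typ G M) G M) ->
  forall G M, R G M -> typ G M.
Proof.
  intros HR G M H. exists (fun G M => R G M \/ typ G M). split; auto.
  intros G' M' [H1|H1]; auto. eapply typI_mono; [|apply typ_unfold; eauto]. auto.
Qed.

Lemma typ_bisim G M M' : typ G M -> bisim M M' -> typ G M'.
Proof.
  intros H1 H2. apply (typ_coind (fun G M' => exists M, typ G M /\ bisim M M')); [|eauto].
  clear. intros G M' [M [H1 H2]]. apply typ_unfold in H1. revert M' H2.
  induction H1; intros M' HB; inversion HB; subst; [eapply t_var | eapply t_app | eapply t_ll
  | eapply t_li1 | eapply t_li2 | eapply t_lc | eapply t_mi | eapply t_mc]; eauto.
Qed.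

Definition wk (F G : env) := forall i, F i = G i \/ (F i = None /\ weak (G i)).

Lemma typ_weak F G N : typ F N -> wk F G -> typ G N.
Proof.
  intros H1 H2. apply (typ_coind (fun G N => exists F, typ F N /\ wk F G)); [|eauto].
  clear. intros G N [F [H1 H2]]. apply typ_unfold in H1. revert G H2.
  induction H1; intros G' HW.
  - constructor. destruct H as [H H']. split.
    + destruct (HW i) as [E|[E _]]; [rewrite <- E; auto|]. rewrite E in H; intuition discriminate.
    + intros j Hj. specialize (H' j Hj). destruct (HW j) as [E|[E W]]; [rewrite <- E|]; auto.
  - apply (t_app _ _ (fun i => match G i with None => G' i | _ => G1 i end)
                     (fun i => match G i with None => G' i | _ => G2 i end)).
    + intro i. specialize (H i). specialize (HW i). envsolve.
    + apply IHtypI1. intro i. specialize (H i). specialize (HW i). envsolve.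
    + apply IHtypI2. intro i. specialize (H i). specialize (HW i). envsolve.
  - constructor. apply IHtypI. intros [|i]; simpl; auto.
  - apply t_li1. apply IHtypI. intros [|i]; simpl; auto.
  - apply t_li2. apply IHtypI. intros [|i]; simpl; auto.
  - constructor. apply IHtypI. intros [|i]; simpl; auto.
  - constructor.
    + intro i. specialize (H i). specialize (HW i). envsolve.
    + apply IHtypI. intro i. specialize (H i). specialize (HW i). envsolve.
  - constructor.
    + intro i. specialize (H i). specialize (HW i). envsolve.
    + left. exists (mc_env G). split; auto. intro i. specialize (H i). specialize (HW i). envsolve.
Qed.

Lemma ext_ins k c o F : ext k (ins c o F) = ins (S c) o (ext k F).
Proof.
  extensionality i. unfold ext, ins. destruct i as [|i]; simpl; auto.
  destruct (Nat.ltb_spec i c), (Nat.ltb_spec (S i) (S c)); try lia; auto.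
  destruct (Nat.eqb_spec i c), (Nat.eqb_spec (S i) (S c)); try lia; auto.
  destruct i; [lia|]. simpl. auto.
Qed.

Lemma var_env_ins F i c : var_env F i ->
  var_env (ins c None F) (if Nat.ltb i c then i else S i).
Proof.
  intros [H1 H2]. unfold ins. split.
  - destruct (Nat.ltb_spec i c).
    + destruct (Nat.ltb_spec i c); [auto|lia].
    + destruct (Nat.ltb_spec (S i) c); [lia|]. destruct (Nat.eqb_spec (S i) c); [lia|]. auto.
  - intros j Hj. destruct (Nat.ltb_spec j c).
    + apply H2. destruct (Nat.ltb_spec i c); lia.
    + destruct (Nat.eqb_spec j c); [exact I|]. apply H2. destruct (Nat.ltb_spec i c); lia.
Qed.

Lemma typ_lift F N c : typ F N -> typ (ins c None F) (lift c N).
Proof.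
  intros H. apply (typ_coind (fun G M => exists c F N, typ F N /\ G = ins c None F /\ M = lift c N));
    [|eauto 6].
  clear. intros G M (c & F & N & H & -> & ->). apply typ_unfold in H. revert c.
  induction H; intro c; simpl_ls.
  - rewrite lift_Var. constructor. apply var_env_ins; auto.
  - apply (t_app _ _ (ins c None G1) (ins c None G2)); auto.
    intro i. unfold ins. destruct (i <? c); [apply H|]. destruct (i =? c); [simpl; auto|apply H].
  - constructor. rewrite ext_ins. auto.
  - apply t_li1. rewrite ext_ins. auto.
  - apply t_li2. rewrite ext_ins. auto.
  - constructor. rewrite ext_ins. auto.
  - constructor.
    + intro i. unfold ins. destruct (i <? c); [apply H|]. destruct (i =? c); [discriminate|apply H].
    + replace (mi_env (ins c None G)) with (ins c None (mi_env G)); auto.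
      extensionality i. unfold ins, mi_env. destruct (i <? c); auto. destruct (i =? c); auto.
  - constructor.
    + intro i. unfold ins. destruct (i <? c); [apply H|]. destruct (i =? c); [exact I|apply H].
    + left. exists c, (mc_env G), M. repeat split; auto.
      extensionality i. unfold ins, mc_env. destruct (i <? c); auto. destruct (i =? c); auto.
Qed.

Lemma typ_lift0w F N o : typ F N -> weak o -> typ (econs o F) (lift 0 N).
Proof.
  intros H W. eapply typ_weak; [apply typ_lift; eauto|].
  intros [|i]; unfold ins, econs; simpl; auto.
Qed.

Definition cv (F G : env) := forall i, F i = G i \/ (F i = Some KLin /\ G i = Some KHash)
   \/ (F i = None /\ G i = Some KHash).

Lemma typ_conv F G N : typI typ F N -> cv F G -> typI typ G N.
Proof.
  intro H. revert G. induction H; intros G' HC.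
  - constructor. destruct H as [H H']. split.
    + destruct (HC i) as [E|[[E1 E2]|[E1 E2]]]; [rewrite <- E; auto|auto|].
      rewrite E1 in H; intuition discriminate.
    + intros j Hj. specialize (H' j Hj).
      destruct (HC j) as [E|[[E1 E2]|[E1 E2]]]; [rewrite <- E; auto|rewrite E1 in H'; contradiction|rewrite E2; exact I].
  - apply (t_app _ _ (fun i => match G' i, G i with Some KHash, Some KLin => Some KHash
                       | Some KHash, None => Some KHash | _, _ => G1 i end)
                     (fun i => match G' i, G i with Some KHash, Some KLin => Some KHash
                       | Some KHash, None => Some KHash | _, _ => G2 i end)).
    + intro i. specialize (H i). specialize (HC i). envsolve.
    + apply IHtypI1. intro i. specialize (H i). specialize (HC i). envsolve.
    + apply IHtypI2. intro i. specialize (H i). specialize (HC i). envsolve.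
  - constructor. apply IHtypI. intros [|i]; simpl; auto.
  - apply t_li1. apply IHtypI. intros [|i]; simpl; auto.
  - apply t_li2. apply IHtypI. intros [|i]; simpl; auto.
  - constructor. apply IHtypI. intros [|i]; simpl; auto.
  - constructor.
    + intro i. specialize (H i). specialize (HC i). envsolve.
    + replace (mi_env G') with (mi_env G); auto. extensionality i.
      specialize (H i). specialize (HC i). envsolve.
  - constructor.
    + intro i. specialize (H i). specialize (HC i). envsolve.
    + replace (mc_env G') with (mc_env G); auto. extensionality i.
      specialize (H i). specialize (HC i). envsolve.
Qed.


Lemma ext_rem k c E : ext k (rem c E) = rem (S c) (ext k E).
Proof.
  extensionality i. unfold ext, rem. destruct i as [|i]; simpl; auto;
  destruct (Nat.ltb_spec i c), (Nat.ltb_spec (S i) (S c)); try lia; auto.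
Qed.

Lemma cons_rem o c E : econs o (rem c E) = rem (S c) (econs o E).
Proof.
  extensionality i. unfold econs, rem. destruct i as [|i]; simpl; auto;
  destruct (Nat.ltb_spec i c), (Nat.ltb_spec (S i) (S c)); try lia; auto.
Qed.

Lemma rem0 k E : rem 0 (ext k E) = E.
Proof. extensionality i. unfold rem, ext. destruct (Nat.ltb_spec i 0); [lia|auto]. Qed.

Lemma split_rem k G G1 G2 : app_split G G1 G2 -> app_split (rem k G) (rem k G1) (rem k G2).
Proof. intros H i. unfold rem. destruct (i <? k); apply H. Qed.

Lemma mi_rem k E : mi_env (rem k E) = rem k (mi_env E).
Proof. extensionality i. unfold rem, mi_env. destruct (i <? k); auto. Qed.
Lemma mc_rem k E : mc_env (rem k E) = rem k (mc_env E).
Proof. extensionality i. unfold rem, mc_env. destruct (i <? k); auto. Qed.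
Lemma mi_ok_rem k E : mi_ok E -> mi_ok (rem k E).
Proof. intros H i. unfold rem. destruct (i <? k); apply H. Qed.
Lemma mc_ok_rem k E : mc_ok E -> mc_ok (rem k E).
Proof. intros H i. unfold rem. destruct (i <? k); apply H. Qed.

Lemma var_env_rem E i k : var_env E i -> i <> k -> weak (E k) ->
  var_env (rem k E) (if Nat.ltb k i then pred i else i).
Proof.
  intros [H1 H2] Hik W. unfold rem. split.
  - destruct (Nat.ltb_spec k i).
    + destruct (Nat.ltb_spec (pred i) k); [lia|]. replace (S (pred i)) with i by lia. auto.
    + destruct (Nat.ltb_spec i k); [auto|lia].
  - intros j Hj. destruct (Nat.ltb_spec j k).
    + apply H2. destruct (Nat.ltb_spec k i); lia.
    + apply H2. destruct (Nat.ltb_spec k i); lia.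
Qed.

Lemma rem_at E k j : rem k E j = E (if Nat.ltb j k then j else S j).
Proof. unfold rem. destruct (j <? k); auto. Qed.

Definition dagc (F G : env) := forall i, F i = None \/ (F i = Some KDag /\ G i = Some KDag).

Lemma typ_subdag : forall k E A N F, typ E A ->
  (E k = None \/ (E k = Some KDag /\ typ F N /\ dagc F (rem k E))) ->
  typ (rem k E) (substk k N A).
Proof.
  intros k E A N F H1 H2.
  apply (typ_coind (fun G M => exists k E A N F, typ E A /\
     (E k = None \/ (E k = Some KDag /\ typ F N /\ dagc F (rem k E))) /\
     G = rem k E /\ M = substk k N A)); [|exists k, E, A, N, F; auto].
  clear. intros G M (k & E & A & N & F & H & HC & -> & ->).
  apply typ_unfold in H. revert k N F HC. induction H; intros k Ns F HC; simpl_ls.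
  - rewrite subst_Var. destruct (Nat.eqb_spec i k).
    + subst. destruct HC as [HC|[HC [HN HD]]].
      * destruct H as [[H|[H|H]] _]; congruence.
      * assert (HT : typ (rem k G) Ns).
        { eapply typ_weak; [apply HN|].
          intro j. destruct (HD j) as [E|[E1 E2]]; [|left; congruence].
          right; split; auto. rewrite rem_at. apply H.
          destruct (Nat.ltb_spec j k); lia. }
        eapply typI_mono; [|apply typ_unfold; exact HT]. auto.
    + pose proof (var_env_rem _ _ _ H n) as HV.
      destruct (Nat.ltb k i); constructor; apply HV;
        destruct HC as [HC|[HC _]]; rewrite HC; exact I.
  - apply (t_app _ _ (rem k G1) (rem k G2)); [apply split_rem; auto| |].
    + apply (IHtypI1 k Ns F). pose proof (H k) as Hk. destruct HC as [HC|[HC [HN HD]]]; rewrite HC in Hk.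
      * left; tauto.
      * right; repeat split; try tauto. intro j. destruct (HD j) as [E|[E1 E2]]; auto.
        right; split; auto. pose proof (split_rem k _ _ _ H j) as Hj. rewrite E2 in Hj; tauto.
    + apply (IHtypI2 k Ns F). pose proof (H k) as Hk. destruct HC as [HC|[HC [HN HD]]]; rewrite HC in Hk.
      * left; tauto.
      * right; repeat split; try tauto. intro j. destruct (HD j) as [E|[E1 E2]]; auto.
        right; split; auto. pose proof (split_rem k _ _ _ H j) as Hj. rewrite E2 in Hj; tauto.
  - constructor. rewrite ext_rem. apply (IHtypI (S k) (lift 0 Ns) (econs None F)).
    destruct HC as [HC|[HC [HN HD]]]; [left; auto|right; repeat split; auto].
    + apply typ_lift0w; auto; exact I.
    + intros [|j]; simpl; auto; rewrite <- ext_rem; apply HD.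
  - apply t_li1. rewrite ext_rem. apply (IHtypI (S k) (lift 0 Ns) (econs None F)).
    destruct HC as [HC|[HC [HN HD]]]; [left; auto|right; repeat split; auto].
    + apply typ_lift0w; auto; exact I.
    + intros [|j]; simpl; auto; rewrite <- ext_rem; apply HD.
  - apply t_li2. rewrite ext_rem. apply (IHtypI (S k) (lift 0 Ns) (econs None F)).
    destruct HC as [HC|[HC [HN HD]]]; [left; auto|right; repeat split; auto].
    + apply typ_lift0w; auto; exact I.
    + intros [|j]; simpl; auto; rewrite <- ext_rem; apply HD.
  - constructor. rewrite ext_rem. apply (IHtypI (S k) (lift 0 Ns) (econs None F)).
    destruct HC as [HC|[HC [HN HD]]]; [left; auto|right; repeat split; auto].
    + apply typ_lift0w; auto; exact I.
    + intros [|j]; simpl; auto; rewrite <- ext_rem; apply HD.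
  - constructor; [apply mi_ok_rem; auto|]. rewrite mi_rem. apply (IHtypI k Ns F).
    destruct HC as [HC|[HC [HN HD]]]; [left; unfold mi_env; rewrite HC; auto|right; repeat split; auto].
    + unfold mi_env; rewrite HC; auto.
    + intro j. destruct (HD j) as [E|[E1 E2]]; auto. right; split; auto.
      rewrite <- mi_rem. unfold mi_env. rewrite E2. auto.
  - constructor; [apply mc_ok_rem; auto|]. left. exists k, (mc_env G), M, Ns, F.
    repeat split; auto; [|apply mc_rem].
    destruct HC as [HC|[HC [HN HD]]]; [left; unfold mc_env; rewrite HC; auto|right; repeat split; auto].
    + unfold mc_env; rewrite HC; auto.
    + intro j. destruct (HD j) as [E|[E1 E2]]; auto. right; split; auto.
      rewrite <- mc_rem. unfold mc_env. rewrite E2. auto.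
Qed.


Definition okind (k : kind) : option kind :=
  match k with KLin | KInd => None | _ => Some k end.
Lemma okind_weak k : weak (okind k).
Proof. destruct k; simpl; auto. Qed.

Lemma split_ext k G R F : app_split G R F -> app_split (ext k G) (ext k R) (econs (okind k) F).
Proof. intros H [|i]; simpl; [destruct k; simpl; auto|apply H]. Qed.

Lemma typ_unshift E A k N : typ E A -> E k = None -> typ (rem k E) (substk k N A).
Proof. intros H1 H2. apply (typ_subdag k E A N E); auto. Qed.

Lemma typI_of_typ G M : typ G M -> typI typ G M.
Proof. apply typ_unfold. Qed.

Ltac bind_case IH k N F G kd :=
  apply (IH (S k) (lift 0 N) (econs (okind kd) F) (ext kd G));
  [simpl; auto | apply typ_lift0w; auto; apply okind_weak | rewrite <- ext_rem; apply split_ext; auto].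

Lemma sub_lin : forall E A, typI typ E A -> forall k N F G, E k = Some KLin -> typ F N ->
  app_split G (rem k E) F -> typI typ G (substk k N A).
Proof.
  induction 1; intros k Ns F G' HE HN HS; simpl_ls.
  - rewrite subst_Var. destruct (Nat.eqb_spec i k).
    + subst i. apply typI_of_typ. replace G' with F; auto. extensionality j.
      specialize (HS j). destruct H as [_ H]. rewrite rem_at in HS.
      assert (W : weak (G (if j <? k then j else S j))) by (apply H; destruct (Nat.ltb_spec j k); lia).
      revert HS W. generalize (G (if j <? k then j else S j)). intros o HS W.
      destruct (G' j) as [[]|], (F j) as [[]|], o as [[]|]; simpl in *; intuition congruence.
    + exfalso. destruct H as [_ H]. specialize (H k). rewrite HE in H. apply H; auto.
  - pose proof (H k) as Hk. rewrite HE in Hk. pose proof (split_rem k _ _ _ H) as HR.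
    destruct Hk as [[H1k H2k]|[H1k H2k]].
    + apply (t_app _ _ (fun j => match G' j with Some KLin | Some KInd =>
                     match rem k G2 j with Some _ => None | None => G' j end | o => o end) (rem k G2)).
      * intro j. specialize (HS j). specialize (HR j). envsolve.
      * apply (IHtypI1 k Ns F); auto. intro j. specialize (HS j). specialize (HR j). envsolve.
      * apply typI_of_typ, typ_unshift; auto. apply typ_fold; auto.
    + apply (t_app _ _ (rem k G1) (fun j => match G' j with Some KLin | Some KInd =>
                     match rem k G1 j with Some _ => None | None => G' j end | o => o end)).
      * intro j. specialize (HS j). specialize (HR j). envsolve.
      * apply typI_of_typ, typ_unshift; auto. apply typ_fold; auto.
      * apply (IHtypI2 k Ns F); auto. intro j. specialize (HS j). specialize (HR j). envsolve.
  - constructor. bind_case IHtypI k Ns F G' KLin.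
  - apply t_li1. bind_case IHtypI k Ns F G' KHash.
  - apply t_li2. bind_case IHtypI k Ns F G' KInd.
  - constructor. bind_case IHtypI k Ns F G' KCoi.
  - exfalso. apply (H k). auto.
  - exfalso. specialize (H k). rewrite HE in H. auto.
Qed.


Lemma mi_cons_typ G2 N kd : typ (mi_env G2) N -> typ (mi_env (econs (okind kd) G2)) (lift 0 N).
Proof.
  intro H. replace (mi_env (econs (okind kd) G2)) with (econs (mi_env (econs (okind kd) G2) 0) (mi_env G2)).
  - apply typ_lift0w; auto. destruct kd; simpl; auto.
  - extensionality i. destruct i; reflexivity.
Qed.
Lemma mc_cons_typ G2 N kd : typ (mc_env G2) N -> typ (mc_env (econs (okind kd) G2)) (lift 0 N).
Proof.
  intro H. replace (mc_env (econs (okind kd) G2)) with (econs (mc_env (econs (okind kd) G2) 0) (mc_env G2)).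
  - apply typ_lift0w; auto. destruct kd; simpl; auto.
  - extensionality i. destruct i; reflexivity.
Qed.
Lemma mi_ok_cons G2 kd : mi_ok G2 -> mi_ok (econs (okind kd) G2).
Proof. intros H [|i]; simpl; [destruct kd; discriminate|apply H]. Qed.
Lemma mc_ok_cons G2 kd : mc_ok G2 -> mc_ok (econs (okind kd) G2).
Proof. intros H [|i]; simpl; [destruct kd; simpl; auto|apply H]. Qed.

Ltac bind_ind IH k N G2 G kd :=
  apply (IH (S k) (lift 0 N) (econs (okind kd) G2) (ext kd G));
  [simpl; auto | apply mi_ok_cons; auto | apply mi_cons_typ; auto
  | rewrite <- ext_rem; apply split_ext; auto].

Lemma sub_ind : forall E A, typI typ E A -> forall k N G2 G, E k = Some KInd -> mi_ok G2 ->
  typ (mi_env G2) N -> app_split G (rem k E) G2 -> typI typ G (substk k N A).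
Proof.
  induction 1; intros k Ns F G' HE HOK HN HS; simpl_ls.
  - exfalso. destruct H as [H1 H2]. destruct (Nat.eqb_spec i k).
    + subst; intuition congruence.
    + specialize (H2 k). rewrite HE in H2. apply H2; auto.
  - pose proof (H k) as Hk. rewrite HE in Hk. pose proof (split_rem k _ _ _ H) as HR.
    destruct Hk as [[H1k H2k]|[H1k H2k]].
    + apply (t_app _ _ (fun j => match G' j with Some KLin | Some KInd =>
                     match rem k G2 j with Some _ => None | None => G' j end | o => o end) (rem k G2)).
      * intro j. specialize (HS j). specialize (HR j). envsolve.
      * apply (IHtypI1 k Ns F); auto. intro j. specialize (HS j). specialize (HR j). envsolve.
      * apply typI_of_typ, typ_unshift; auto. apply typ_fold; auto.
    + apply (t_app _ _ (rem k G1) (fun j => match G' j with Some KLin | Some KInd =>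
                     match rem k G1 j with Some _ => None | None => G' j end | o => o end)).
      * intro j. specialize (HS j). specialize (HR j). envsolve.
      * apply typI_of_typ, typ_unshift; auto. apply typ_fold; auto.
      * apply (IHtypI2 k Ns F); auto. intro j. specialize (HS j). specialize (HR j). envsolve.
  - constructor. bind_ind IHtypI k Ns F G' KLin.
  - apply t_li1. bind_ind IHtypI k Ns F G' KHash.
  - apply t_li2. bind_ind IHtypI k Ns F G' KInd.
  - constructor. bind_ind IHtypI k Ns F G' KCoi.
  - constructor.
    + intro j. specialize (HS j). specialize (HOK j). pose proof (mi_ok_rem k _ H j) as Hj. envsolve.
    + apply (sub_lin _ _ H0 k Ns (mi_env F)).
      * unfold mi_env; rewrite HE; auto.
      * auto.
      * rewrite <- mi_rem. intro j. specialize (HS j). specialize (HOK j).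
        pose proof (mi_ok_rem k _ H j) as Hj. envsolve.
  - exfalso. specialize (H k). rewrite HE in H. auto.
Qed.


Definition hashify (G2 G : env) : env :=
  fun i => match G2 i with Some KInd => Some KHash | _ => G i end.

Lemma var_hash R G G2 i : var_env R i -> app_split G R G2 -> mi_ok G2 ->
  var_env (hashify G2 G) i.
Proof.
  intros [H1 H2] HS HOK. split.
  - specialize (HS i). specialize (HOK i). unfold hashify. envsolve.
  - intros j Hj. specialize (H2 j Hj). specialize (HS j). specialize (HOK j). unfold hashify. envsolve.
Qed.

Lemma var_weak2 R G G2 i : var_env R i -> app_split G R G2 -> mc_ok G2 -> var_env G i.
Proof.
  intros [H1 H2] HS HOK. split.
  - specialize (HS i). specialize (HOK i). envsolve.
  - intros j Hj. specialize (H2 j Hj). specialize (HS j). specialize (HOK j). envsolve.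
Qed.

Lemma hashify_ext G2 G kd : hashify (econs (okind kd) G2) (ext kd G) = ext kd (hashify G2 G).
Proof. extensionality i. destruct i; unfold hashify; simpl; auto. destruct kd; auto. Qed.

Lemma sub_hash : forall E A, typI typ E A -> forall k N G2 G, E k = Some KHash -> mi_ok G2 ->
  typ (mi_env G2) N -> app_split G (rem k E) G2 -> typI typ (hashify G2 G) (substk k N A).
Proof.
  induction 1; intros k Ns F G' HE HOK HN HS; simpl_ls.
  - rewrite subst_Var. destruct (Nat.eqb_spec i k).
    + subst i. apply (typ_conv (mi_env F)); [apply typI_of_typ; auto|].
      intro j. specialize (HS j). specialize (HOK j). destruct H as [_ H].
      rewrite rem_at in HS.
      assert (W : weak (G (if j <? k then j else S j))) by (apply H; destruct (Nat.ltb_spec j k); lia).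
      revert HS W. generalize (G (if j <? k then j else S j)). intros o HS W.
      unfold hashify, mi_env. envsolve.
    + assert (W : weak (G k)) by (rewrite HE; exact I).
      pose proof (var_env_rem _ _ _ H n W) as HV.
      destruct (Nat.ltb k i); constructor; eapply var_hash; eauto.
  - pose proof (H k) as Hk. rewrite HE in Hk. pose proof (split_rem k _ _ _ H) as HR.
    apply (t_app _ _ (hashify F (fun j => match F j with Some KInd => Some KInd | _ =>
              match G' j with Some KLin | Some KInd =>
                     match rem k G2 j with Some _ => None | None => G' j end | o => o end end))
                     (hashify F (fun j => match F j with Some KInd => Some KInd | _ =>
              match G' j with Some KLin | Some KInd =>
                     match rem k G1 j with Some _ => None | None => G' j end | o => o end end))).
    + intro j. specialize (HS j). specialize (HR j). specialize (HOK j). unfold hashify. envsolve.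
    + apply (IHtypI1 k Ns F); try tauto. intro j. specialize (HS j). specialize (HR j).
      specialize (HOK j). envsolve.
    + apply (IHtypI2 k Ns F); try tauto. intro j. specialize (HS j). specialize (HR j).
      specialize (HOK j). envsolve.
  - constructor. rewrite <- (hashify_ext _ _ KLin). bind_ind IHtypI k Ns F G' KLin.
  - apply t_li1. rewrite <- (hashify_ext _ _ KHash). bind_ind IHtypI k Ns F G' KHash.
  - apply t_li2. rewrite <- (hashify_ext _ _ KInd). bind_ind IHtypI k Ns F G' KInd.
  - constructor. rewrite <- (hashify_ext _ _ KCoi). bind_ind IHtypI k Ns F G' KCoi.
  - constructor.
    + intro j. specialize (HS j). specialize (HOK j). pose proof (mi_ok_rem k _ H j) as Hj.
      unfold hashify. envsolve.
    + replace (mi_env (hashify F G')) with (rem k (mi_env G)).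
      * apply typI_of_typ, typ_unshift; [apply typ_fold; auto|unfold mi_env; rewrite HE; auto].
      * rewrite <- mi_rem. extensionality j. specialize (HS j). specialize (HOK j).
        pose proof (mi_ok_rem k _ H j) as Hj. unfold hashify. envsolve.
  - constructor.
    + intro j. specialize (HS j). specialize (HOK j). pose proof (mc_ok_rem k _ H j) as Hj.
      unfold hashify. envsolve.
    + replace (mc_env (hashify F G')) with (rem k (mc_env G)).
      * apply typ_unshift; [auto|unfold mc_env; rewrite HE; auto].
      * rewrite <- mc_rem. extensionality j. specialize (HS j). specialize (HOK j).
        pose proof (mc_ok_rem k _ H j) as Hj. unfold hashify. envsolve.
Qed.


Ltac bind_coi IH k N G2 G kd :=
  apply (IH (S k) (lift 0 N) (econs (okind kd) G2) (ext kd G));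
  [simpl; auto | apply mc_ok_cons; auto | apply mc_cons_typ; auto
  | rewrite <- ext_rem; apply split_ext; auto].

Lemma sub_coi : forall E A, typI typ E A -> forall k N G2 G, E k = Some KCoi -> mc_ok G2 ->
  typ (mc_env G2) N -> app_split G (rem k E) G2 -> typI typ G (substk k N A).
Proof.
  induction 1; intros k Ns F G' HE HOK HN HS; simpl_ls.
  - rewrite subst_Var. destruct (Nat.eqb_spec i k).
    + exfalso. subst i. destruct H as [H _]. intuition congruence.
    + assert (W : weak (G k)) by (rewrite HE; exact I).
      pose proof (var_env_rem _ _ _ H n W) as HV.
      destruct (Nat.ltb k i); constructor; eapply var_weak2; eauto.
  - pose proof (H k) as Hk. rewrite HE in Hk. pose proof (split_rem k _ _ _ H) as HR.
    apply (t_app _ _ (fun j => match G' j with Some KLin | Some KInd =>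
                     match rem k G2 j with Some _ => None | None => G' j end | o => o end)
                     (fun j => match G' j with Some KLin | Some KInd =>
                     match rem k G1 j with Some _ => None | None => G' j end | o => o end)).
    + intro j. specialize (HS j). specialize (HR j). specialize (HOK j). envsolve.
    + apply (IHtypI1 k Ns F); try tauto. intro j. specialize (HS j). specialize (HR j).
      specialize (HOK j). envsolve.
    + apply (IHtypI2 k Ns F); try tauto. intro j. specialize (HS j). specialize (HR j).
      specialize (HOK j). envsolve.
  - constructor. bind_coi IHtypI k Ns F G' KLin.
  - apply t_li1. bind_coi IHtypI k Ns F G' KHash.
  - apply t_li2. bind_coi IHtypI k Ns F G' KInd.
  - constructor. bind_coi IHtypI k Ns F G' KCoi.
  - constructor.
    + intro j. specialize (HS j). specialize (HOK j). pose proof (mi_ok_rem k _ H j) as Hj. envsolve.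
    + apply (IHtypI k Ns (mi_env F)).
      * unfold mi_env; rewrite HE; auto.
      * intro j. specialize (HOK j). envsolve.
      * replace (mc_env (mi_env F)) with (mc_env F); auto. extensionality j. envsolve.
      * rewrite <- mi_rem. intro j. specialize (HS j). specialize (HOK j).
        pose proof (mi_ok_rem k _ H j) as Hj. envsolve.
  - constructor.
    + intro j. specialize (HS j). specialize (HOK j). pose proof (mc_ok_rem k _ H j) as Hj. envsolve.
    + replace (mc_env G') with (rem k (mc_env G)).
      * apply (typ_subdag k (mc_env G) M Ns (mc_env F)); auto. right.
        split; [unfold mc_env; rewrite HE; auto|split; auto].
        intro j. specialize (HS j). specialize (HOK j). rewrite <- mc_rem.
        pose proof (mc_ok_rem k _ H j) as Hj. envsolve.
      * rewrite <- mc_rem. extensionality j. specialize (HS j). specialize (HOK j).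
        pose proof (mc_ok_rem k _ H j) as Hj. envsolve.
Qed.


Definition envup (G G' : env) := forall i, G' i = G i \/ (G i = Some KInd /\ G' i = Some KHash).


Lemma inv_app (R : env -> term -> Prop) G M N : typI R G (App M N) -> exists G1 G2, app_split G G1 G2 /\ typI R G1 M /\ typI R G2 N.
Proof. intro H; inversion H; subst; eauto. Qed.
Lemma inv_lam (R : env -> term -> Prop) G M : typI R G (Lam M) -> typI R (ext KLin G) M.
Proof. intro H; inversion H; subst; eauto. Qed.
Lemma inv_lamI (R : env -> term -> Prop) G M : typI R G (LamI M) -> typI R (ext KHash G) M \/ typI R (ext KInd G) M.
Proof. intro H; inversion H; subst; eauto. Qed.
Lemma inv_lamC (R : env -> term -> Prop) G M : typI R G (LamC M) -> typI R (ext KCoi G) M.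
Proof. intro H; inversion H; subst; eauto. Qed.
Lemma inv_boxI (R : env -> term -> Prop) G M : typI R G (BoxI M) -> mi_ok G /\ typI R (mi_env G) M.
Proof. intro H; inversion H; subst; eauto. Qed.
Lemma inv_boxC (R : env -> term -> Prop) G M : typI R G (BoxC M) -> mc_ok G /\ R (mc_env G) M.
Proof. intro H; inversion H; subst; eauto. Qed.

Lemma envup_refl G : envup G G.
Proof. intro; auto. Qed.

Lemma sr_base M N : redex M N -> forall G, typI typ G M -> exists G', envup G G' /\ typI typ G' N.
Proof.
  intros HR G HT. destruct HR; apply inv_app in HT; destruct HT as (G1 & G2 & HS & HA & HB);
    unfold subst0.
  - apply inv_lam in HA. exists G; split; [apply envup_refl|].
    apply (sub_lin _ _ HA 0 N G2 G); [reflexivity | apply typ_fold; auto | rewrite rem0; auto].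
  - apply inv_boxI in HB. destruct HB as [HOK HB]. apply inv_lamI in HA. destruct HA as [HA|HA].
    + exists (hashify G2 G). split.
      * intro i. specialize (HS i). unfold hashify. envsolve.
      * apply (sub_hash _ _ HA 0 N G2 G); [reflexivity | auto | apply typ_fold; auto | rewrite rem0; auto].
    + exists G; split; [apply envup_refl|].
      apply (sub_ind _ _ HA 0 N G2 G); [reflexivity | auto | apply typ_fold; auto | rewrite rem0; auto].
  - apply inv_boxC in HB. destruct HB as [HOK HB]. apply inv_lamC in HA.
    exists G; split; [apply envup_refl|].
    apply (sub_coi _ _ HA 0 N G2 G); [reflexivity | auto | auto | rewrite rem0; auto].
Qed.

Lemma envup_noind G G' : (forall i, G i <> Some KInd) -> envup G G' -> G' = G.
Proof. intros H1 H2. extensionality i. destruct (H2 i) as [E|[E _]]; auto. exfalso; eapply H1; eauto. Qed.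
Lemma mi_noind G i : mi_env G i <> Some KInd.
Proof. unfold mi_env; destruct (G i) as [[]|]; discriminate. Qed.
Lemma mc_noind G i : mc_env G i <> Some KInd.
Proof. unfold mc_env; destruct (G i) as [[]|]; discriminate. Qed.

Lemma sr : forall d M N, ctx_step d M N -> forall G, typI typ G M ->
  exists G', envup G G' /\ typI typ G' N.
Proof.
  induction 1; intros G HT.
  - eapply sr_base; eauto.
  - apply inv_app in HT. destruct HT as (G1 & G2 & H3 & H4 & H5).
    destruct (IHctx_step _ H4) as [G1' [HU HT']].
    exists (fun i => match G1 i, G1' i with Some KInd, Some KHash => Some KHash | _, _ => G i end).
    split.
    + intro i. specialize (HU i). specialize (H3 i). envsolve.
    + apply (t_app _ _ G1' (fun i => match G1 i, G1' i with Some KInd, Some KHash => Some KHash | _, _ => G2 i end)); auto.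
      * intro i. specialize (HU i). specialize (H3 i). envsolve.
      * apply typI_of_typ. eapply typ_weak; [apply typ_fold; eauto|].
        intro i. specialize (HU i). specialize (H3 i). envsolve.
  - apply inv_app in HT. destruct HT as (G1 & G2 & H3 & H4 & H5).
    destruct (IHctx_step _ H5) as [G2' [HU HT']].
    exists (fun i => match G2 i, G2' i with Some KInd, Some KHash => Some KHash | _, _ => G i end).
    split.
    + intro i. specialize (HU i). specialize (H3 i). envsolve.
    + apply (t_app _ _ (fun i => match G2 i, G2' i with Some KInd, Some KHash => Some KHash | _, _ => G1 i end) G2'); auto.
      * intro i. specialize (HU i). specialize (H3 i). envsolve.
      * apply typI_of_typ. eapply typ_weak; [apply typ_fold; eauto|].
        intro i. specialize (HU i). specialize (H3 i). envsolve.
  - apply inv_lam in HT. destruct (IHctx_step _ HT) as [G'' [HU HT']].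
    exists (fun i => G'' (S i)). split.
    + intro i. apply (HU (S i)).
    + constructor. replace (ext KLin (fun i => G'' (S i))) with G''; auto.
      extensionality i. destruct i; auto. destruct (HU 0) as [E|[E _]]; simpl in *; congruence.
  - apply inv_lamI in HT. destruct HT as [HT|HT].
    + destruct (IHctx_step _ HT) as [G'' [HU HT']].
      exists (fun i => G'' (S i)). split.
      * intro i. apply (HU (S i)).
      * apply t_li1. replace (ext KHash (fun i => G'' (S i))) with G''; auto.
        extensionality i. destruct i; auto. destruct (HU 0) as [E|[E _]]; simpl in *; congruence.
    + destruct (IHctx_step _ HT) as [G'' [HU HT']].
      exists (fun i => G'' (S i)). split.
      * intro i. apply (HU (S i)).
      * destruct (HU 0) as [E|[_ E]]; simpl in E.
        -- apply t_li2. replace (ext KInd (fun i => G'' (S i))) with G''; auto.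
           extensionality i. destruct i; auto.
        -- apply t_li1. replace (ext KHash (fun i => G'' (S i))) with G''; auto.
           extensionality i. destruct i; auto.
  - apply inv_lamC in HT. destruct (IHctx_step _ HT) as [G'' [HU HT']].
    exists (fun i => G'' (S i)). split.
    + intro i. apply (HU (S i)).
    + constructor. replace (ext KCoi (fun i => G'' (S i))) with G''; auto.
      extensionality i. destruct i; auto. destruct (HU 0) as [E|[E _]]; simpl in *; congruence.
  - apply inv_boxI in HT. destruct HT as [HOK HT]. destruct (IHctx_step _ HT) as [G'' [HU HT']].
    rewrite (envup_noind _ _ (mi_noind G) HU) in HT'.
    exists G; split; [apply envup_refl|]. constructor; auto.
  - apply inv_boxC in HT. destruct HT as [HOK HT].
    destruct (IHctx_step _ (typI_of_typ _ _ HT)) as [G'' [HU HT']].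
    rewrite (envup_noind _ _ (mc_noind G) HU) in HT'.
    exists G; split; [apply envup_refl|]. constructor; auto. apply typ_fold; auto.
Qed.

Lemma typ_step_noind G M N : typ G M -> (forall i, G i <> Some KInd) -> step M N -> typ G N.
Proof.
  intros HT HN (M' & N' & H1 & H2 & H3).
  destruct (sr _ _ _ H2 G) as [G' [HU HT']]; [apply typI_of_typ; eapply typ_bisim; eauto|].
  rewrite (envup_noind _ _ HN HU) in HT'. eapply typ_bisim; [apply typ_fold; eauto|auto].
Qed.

Lemma typ_star_noind G M N : typ G M -> (forall i, G i <> Some KInd) -> star M N -> typ G N.
Proof.
  intros HT HN HS. induction HS.
  - eapply typ_bisim; eauto.
  - apply IHHS. eapply typ_step_noind; eauto.
Qed.

Definition LR (G : env) (X : term) : Prop :=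
  exists Y, typ G Y /\ (forall i, G i <> Some KInd) /\ infred Y X.

Lemma leads_typ_inner : forall D X, leadsI infred D X -> forall G, typI typ G D ->
  typI (fun G M => LR G M \/ typ G M) G X.
Proof.
  induction 1; intros G HT; inversion HT; subst.
  - constructor; auto.
  - eapply t_app; eauto.
  - constructor; auto.
  - apply t_li1; auto.
  - apply t_li2; auto.
  - constructor; auto.
  - constructor; auto.
  - constructor; auto. left. exists M; split; auto. split; auto. apply mc_noind.
Qed.

Lemma leads_typ G M L : typI typ G M -> leadsI infred M L -> typ G L.
Proof.
  intros HT HL. pose proof (leads_typ_inner _ _ HL _ HT) as H.
  assert (C : forall G M, LR G M -> typ G M).
  { apply typ_coind. intros G' X (Y & H1 & H2 & H3).
    destruct (infred_unfold _ _ H3) as [D [H4 H5]].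
    apply (leads_typ_inner D); auto. apply typI_of_typ. eapply typ_star_noind; eauto. }
  apply typ_fold. eapply typI_mono; [|eauto]. intros G' X [H1|H1]; auto.
Qed.

Lemma no_occ : forall G A, typI typ G A -> forall k, G k = Some KCoi -> ~ occ0 k A.
Proof.
  induction 1; intros k Hk Ho; inversion Ho; subst.
  - destruct H as [H _]. intuition congruence.
  - specialize (H k). rewrite Hk in H. destruct H. apply (IHtypI1 k); auto.
  - specialize (H k). rewrite Hk in H. destruct H. apply (IHtypI2 k); auto.
  - apply (IHtypI (S k)); simpl; auto.
  - apply (IHtypI (S k)); simpl; auto.
  - apply (IHtypI (S k)); simpl; auto.
  - apply (IHtypI (S k)); simpl; auto.
  - apply (IHtypI k); auto. unfold mi_env. rewrite Hk. auto.
Qed.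


Lemma main_aux : forall M N, ctx_step false M N -> forall G L, typI typ G M ->
  leadsI infred M L -> exists P, leadsI infred N P /\ ctx_step false L P.
Proof.
  intros M N H. remember false as d eqn:Hd. revert Hd.
  induction H; intros Hd G0 L HT HL.
  - destruct H; apply inv_app in HT; destruct HT as (G1 & G2 & HS & HA & HB);
      inversion HL; subst.
    + match goal with Hl : leadsI _ (Lam _) _ |- _ => inversion Hl; subst end.
      eexists; split; [|apply c_base; constructor].
      apply leads_subst; auto; apply leads_infred; auto.
    + match goal with Hl : leadsI _ (LamI _) _ |- _ => inversion Hl; subst end.
      match goal with Hl : leadsI _ (BoxI _) _ |- _ => inversion Hl; subst end.
      eexists; split; [|apply c_base; constructor].
      apply leads_subst; auto; apply leads_infred; auto.
    + match goal with Hl : leadsI _ (LamC _) _ |- _ => inversion Hl; subst end.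
      match goal with Hl : leadsI _ (BoxC _) _ |- _ => inversion Hl; subst end.
      eexists; split; [|apply c_base; constructor].
      apply leads_subst; auto. intro Ho. exfalso. apply inv_lamC in HA.
      eapply (no_occ _ _ HA 0); eauto.
  - apply inv_app in HT; destruct HT as (G1 & G2 & HS & HA & HB). inversion HL; subst.
    edestruct IHctx_step as [P1 [Q1 Q2]]; [reflexivity|exact HA|eassumption|].
    exists (App P1 P). split; [constructor; auto|apply c_appl; auto].
  - apply inv_app in HT; destruct HT as (G1 & G2 & HS & HA & HB). inversion HL; subst.
    edestruct IHctx_step as [P1 [Q1 Q2]]; [reflexivity|exact HB|eassumption|].
    exists (App N0 P1). split; [constructor; auto|apply c_appr; auto].
  - apply inv_lam in HT. inversion HL; subst.
    edestruct IHctx_step as [P1 [Q1 Q2]]; [reflexivity|exact HT|eassumption|].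
    exists (Lam P1). split; [constructor; auto|apply c_lam; auto].
  - apply inv_lamI in HT. inversion HL; subst. destruct HT as [HT|HT];
    (edestruct IHctx_step as [P1 [Q1 Q2]]; [reflexivity|exact HT|eassumption|];
    exists (LamI P1); (split; [constructor; auto|apply c_lamI; auto])).
  - apply inv_lamC in HT. inversion HL; subst.
    edestruct IHctx_step as [P1 [Q1 Q2]]; [reflexivity|exact HT|eassumption|].
    exists (LamC P1). split; [constructor; auto|apply c_lamC; auto].
  - apply inv_boxI in HT. destruct HT as [_ HT]. inversion HL; subst.
    edestruct IHctx_step as [P1 [Q1 Q2]]; [reflexivity|exact HT|eassumption|].
    exists (BoxI P1). split; [constructor; auto|apply c_boxI; auto].
  - congruence.
Qed.

Theorem mainTheorem18 (M N L : term) :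
  is_term M -> step0 M N -> leads M L ->
  exists P, is_term P /\ leads N P /\ step0 L P.
Proof.
  intros [G [HF HT]] (M' & N' & H1 & H2 & H3) HL.
  assert (HT' : typI typ G M') by (apply typI_of_typ; eapply typ_bisim; eauto).
  assert (HL' : leadsI infred M' L) by (eapply leads_bisim_l; eauto).
  destruct (main_aux _ _ H2 _ _ HT' HL') as [P [H4 H5]].
  exists P. split; [|split].
  - pose proof (leads_typ _ _ _ HT' HL') as HTL.
    destruct (sr _ _ _ H5 G (typI_of_typ _ _ HTL)) as [G' [HU HP]].
    exists G'. split; [|apply typ_fold; auto].
    destruct HF as [n Hn]. exists n. intros i Hi. destruct (HU i) as [E|[E _]]; rewrite Hn in *; auto.
    discriminate.
  - unfold leads. eapply leads_bisim_l; eauto.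
  - exists L, P. split; [apply bisim_refl|split; auto using bisim_refl].
Qed.
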